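(* Every ideal $J$ of $\widetilde{\mathbb{R}}_{sm}$ is absolutely convex: if $x\in J$ and $y\in\widetilde{\mathbb{R}}_{sm}$ with $|y|\le|x|$, then $y\in J$.
   Context: Let $I=(0,1]$. $\widetilde{\mathbb{R}}_{sm}=\mathcal{E}_{M,sm}/\mathcal{N}_{sm}$ where $\mathcal{E}_{M,sm}$ is the set of smooth nets $(r_\varepsilon)_{\varepsilon\in I}\in\mathbb{R}^I$ with $|r_\varepsilon|=O(\varepsilon^{-N})$ for some $N$, and $\mathcal{N}_{sm}$ those with $|r_\varepsilon|=O(\varepsilon^m)$ for all $m$. The natural map $\tau_{sm}$ from $\widetilde{\mathbb{R}}_{sm}$ to the analogous ring $\widetilde{\mathbb{R}}_{co}$ of continuously parametrized nets is a ring isomorphism. Order: $r\le s$ iff there are representatives with $r_\varepsilon\le s_\varepsilon$ for all $\varepsilon$. Absolute value: $|x|=\tau_{sm}^{-1}([(|x_\varepsilon|)_\varepsilon])$. *)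

(* Defs.v *)
From Stdlib Require Import Reals Lra ClassicalEpsilon.
Open Scope R_scope.

(** The parameter interval I = (0,1]. Nets are functions R -> R of which only
    the values on I matter. *)
Definition Iint (e : R) : Prop := 0 < e /\ e <= 1.

Definition net := R -> R.

Definition is_derive_in (f : net) (x l : R) : Prop :=
  forall eps, 0 < eps -> exists delta, 0 < delta /\
    forall h, h <> 0 -> Rabs h < delta -> Iint (x + h) ->
      Rabs ((f (x + h) - f x) / h - l) < eps.

Definition continuous_on_I (f : net) : Prop :=
  forall x, Iint x -> forall eps, 0 < eps -> exists delta, 0 < delta /\
    forall y, Iint y -> Rabs (y - x) < delta -> Rabs (f y - f x) < eps.

Definition smooth_on_I (f : net) : Prop :=
  exists D : nat -> net,
    (forall t, Iint t -> D 0%nat t = f t) /\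
    (forall n t, Iint t -> is_derive_in (D n) t (D (S n) t)).

Definition moderate (r : net) : Prop :=
  exists (N : nat) (C eps0 : R), 0 < eps0 /\
    forall e, Iint e -> e <= eps0 -> Rabs (r e) <= C / e ^ N.

Definition negligible (r : net) : Prop :=
  forall m : nat, exists (C eps0 : R), 0 < eps0 /\
    forall e, Iint e -> e <= eps0 -> Rabs (r e) <= C * e ^ m.

Definition E_sm (r : net) : Prop := smooth_on_I r /\ moderate r.
Definition E_co (r : net) : Prop := continuous_on_I r /\ moderate r.

(** Ambient quotient R^I / (negligible nets): classes of nets. Both
    R~_sm = E_sm/N_sm and R~_co = E_co/N_co embed into it (the class of a
    smooth net modulo N_sm is determined by its ambient class), and under this
    embedding the natural map tau_sm is the inclusion. *)
Definition cls (r : net) : net -> Prop :=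
  fun s => negligible (fun e => s e - r e).

Record Q := mkQ { qset : net -> Prop ; qok : exists r, qset = cls r }.

Definition class (r : net) : Q := mkQ (cls r) (ex_intro _ r eq_refl).

Definition rep (x : Q) : net :=
  proj1_sig (constructive_indefinite_description _ (qok x)).

Definition in_Rsm (x : Q) : Prop := exists r, E_sm r /\ qset x r.
Definition in_Rco (x : Q) : Prop := exists r, E_co r /\ qset x r.

Definition qzero : Q := class (fun _ => 0).
Definition qadd (x y : Q) : Q := class (fun e => rep x e + rep y e).
Definition qopp (x : Q) : Q := class (fun e => - rep x e).
Definition qmul (x y : Q) : Q := class (fun e => rep x e * rep y e).

(** Absolute value: |x| = tau_sm^{-1}([ (|x_eps|) ]), i.e. the class of the
    continuous net |x_eps|, viewed back in R~_sm. *)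
Definition qabs (x : Q) : Q := class (fun e => Rabs (rep x e)).

Definition qle (x y : Q) : Prop :=
  exists a b, E_sm a /\ E_sm b /\ qset x a /\ qset y b /\
    forall e, Iint e -> a e <= b e.

Definition is_ideal_sm (J : Q -> Prop) : Prop :=
  (forall x, J x -> in_Rsm x) /\
  J qzero /\
  (forall x y, J x -> J y -> J (qadd x y)) /\
  (forall x, J x -> J (qopp x)) /\
  (forall a x, in_Rsm a -> J x -> J (qmul a x)).

(* Main.v *)
Require Import Defs.
From Stdlib Require Import Reals Lra Lia ClassicalEpsilon FunctionalExtensionality PropExtensionality ProofIrrelevance.
From Coquelicot Require Import Coquelicot.
Open Scope R_scope.

Lemma ballR x e y : ball x e y <-> Rabs (y - x) < e.
Proof. reflexivity. Qed.

Definition FD (x : R) := within (fun h => h <> 0 /\ Iint (x+h)) (locally 0).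

Global Instance FD_filter x : Filter (FD x).
Proof. unfold FD. apply within_filter, locally_filter. Qed.

Lemma derive_lim f x l : is_derive_in f x l <->
  filterlim (fun h => (f (x+h) - f x)/h) (FD x) (locally l).
Proof.
  split.
  - intros H. apply (filterlim_locally (FF := FD_filter x)). intros [e he].
    destruct (H e he) as [d [hd Hd]].
    exists (mkposreal d hd). intros h Hh [H1 H2]. apply ballR.
    apply Hd; auto. pose proof (proj1 (ballR _ _ _) Hh) as Hh'. rewrite Rminus_0_r in Hh'. exact Hh'.
  - intros H e he. pose proof (proj1 (filterlim_locally (FF := FD_filter x) _ _) H) as H0. clear H. rename H0 into H.
    destruct (H (mkposreal e he)) as [[d hd] Hd].
    exists d. split; auto. intros h h0 hh hI.
    apply ballR. apply Hd; auto. apply ballR. rewrite Rminus_0_r. exact hh.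
Qed.

Lemma lim_mult_R {T} (F : (T -> Prop) -> Prop) {FF : Filter F} (f g : T -> R) a b :
  filterlim f F (locally a) -> filterlim g F (locally b) ->
  filterlim (fun t => f t * g t) F (locally (a * b)).
Proof.
  intros Hf Hg. apply (filterlim_comp_2 f g Rmult Hf Hg (filterlim_mult a b)).
Qed.

Lemma lim_plus_R {T} (F : (T -> Prop) -> Prop) {FF : Filter F} (f g : T -> R) a b :
  filterlim f F (locally a) -> filterlim g F (locally b) ->
  filterlim (fun t => f t + g t) F (locally (a + b)).
Proof.
  intros Hf Hg. apply (filterlim_comp_2 f g Rplus Hf Hg (filterlim_plus a b)).
Qed.

Lemma FD_id x : filterlim (fun h => h) (FD x) (locally 0).
Proof.
  intros P [e He]. exists e. intros y Hy _. apply He; auto.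
Qed.

Lemma lim_ext {T} (F : (T -> Prop) -> Prop) {FF : Filter F} (f g : T -> R) a :
  (forall t, f t = g t) -> filterlim f F (locally a) -> filterlim g F (locally a).
Proof.
  intros E H. apply functional_extensionality in E. now subst.
Qed.

Lemma FD_ext {U} x (f g : R -> U) G :
  (forall h, h <> 0 -> Iint (x+h) -> f h = g h) -> filterlim f (FD x) G -> filterlim g (FD x) G.
Proof.
  intros E H. apply (filterlim_within_ext (FF := @filter_filter _ _ (locally_filter (0:R))) _ f g); auto.
  intros h [h1 h2]. auto.
Qed.

Lemma derive_cont f x l : is_derive_in f x l ->
  filterlim (fun h => f (x+h)) (FD x) (locally (f x)).
Proof.
  intros H. apply derive_lim in H.
  assert (H2 := lim_mult_R (FD x) _ _ _ _ (FD_id x) H).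
  assert (H3 := lim_plus_R (FD x) _ _ _ _ H2 (filterlim_const (F := FD x) (f x))).
  rewrite Rmult_0_l, Rplus_0_l in H3.
  refine (FD_ext x _ _ _ _ H3). intros h h0 _. field. auto.
Qed.

Lemma derive_ext f g x l : Iint x -> (forall t, Iint t -> f t = g t) ->
  is_derive_in f x l -> is_derive_in g x l.
Proof.
  intros Hx E H e he. destruct (H e he) as [d [hd Hd]]. exists d. split; auto.
  intros h h0 hh hI. rewrite <- !E; auto.
Qed.

Lemma derive_const c x : is_derive_in (fun _ => c) x 0.
Proof.
  intros e he. exists 1. split. lra. intros h h0 _ _.
  replace ((c - c) / h - 0) with 0 by (field; auto). rewrite Rabs_R0; auto.
Qed.

Lemma derive_id x : is_derive_in (fun t => t) x 1.
Proof.
  intros e he. exists 1. split. lra. intros h h0 _ _.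
  replace ((x + h - x) / h - 1) with 0 by (field; auto). rewrite Rabs_R0; auto.
Qed.

Lemma derive_plus f g x a b : is_derive_in f x a -> is_derive_in g x b ->
  is_derive_in (fun t => f t + g t) x (a + b).
Proof.
  intros Hf Hg. apply derive_lim in Hf, Hg. apply derive_lim.
  assert (H := lim_plus_R (FD x) _ _ _ _ Hf Hg).
  refine (FD_ext x _ _ _ _ H). intros h h0 _. field. auto.
Qed.

Lemma derive_mult f g x a b : is_derive_in f x a -> is_derive_in g x b ->
  is_derive_in (fun t => f t * g t) x (a * g x + f x * b).
Proof.
  intros Hf Hg. pose proof (derive_cont _ _ _ Hf) as Cf.
  apply derive_lim in Hf, Hg. apply derive_lim.
  assert (H1 := lim_mult_R (FD x) _ _ _ _ Hf (filterlim_const (F := FD x) (g x))).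
  assert (H2 := lim_mult_R (FD x) _ _ _ _ Cf Hg).
  assert (H := lim_plus_R (FD x) _ _ _ _ H1 H2).
  refine (FD_ext x _ _ _ _ H). intros h h0 _. field. auto.
Qed.

Lemma derive_comp (phi : R -> R) d f x l : derivable_pt_lim phi (f x) d ->
  is_derive_in f x l -> is_derive_in (fun t => phi (f t)) x (d * l).
Proof.
  intros Hp Hf. pose proof (derive_cont _ _ _ Hf) as Cf.
  apply derive_lim in Hf. apply derive_lim.
  set (y0 := f x) in *.
  set (Q := fun y => if Req_EM_T y y0 then d else (phi y - phi y0) / (y - y0)).
  assert (CQ : filterlim Q (locally y0) (locally d)).
  { apply filterlim_locally. intros [e he].
    destruct (Hp e he) as [[dl hdl] Hd]. exists (mkposreal dl hdl). intros y Hy.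
    apply ballR. pose proof (proj1 (ballR _ _ _) Hy) as Hy'. clear Hy. simpl in Hy'. unfold Q.
    change (UniformSpace.sort R_UniformSpace) with R in y.
    destruct (Req_EM_T y y0). rewrite Rminus_diag, Rabs_R0; auto.
    specialize (Hd (y - y0)). replace (y0 + (y - y0)) with y in Hd by ring.
    apply Hd; auto. intros E; apply n; lra. }
  assert (H1 := filterlim_comp _ _ _ (fun h => f (x+h)) Q (FD x) (locally y0) (locally d) Cf CQ).
  assert (H := lim_mult_R (FD x) _ _ _ _ H1 Hf).
  refine (FD_ext x _ _ _ _ H). intros h h0 _. unfold Q.
  destruct (Req_EM_T (f (x+h)) y0) as [E|E].
  - rewrite E. unfold Rdiv. rewrite !Rminus_diag. ring.
  - field. split; auto. intros Z; apply E; lra.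
Qed.

Lemma dpl_Rinv y : y <> 0 -> derivable_pt_lim Rinv y (- / (y * y)).
Proof.
  intros Hy. assert (H := derivable_pt_lim_div (fct_cte 1) id y 0 1 (derivable_pt_lim_const 1 y) (derivable_pt_lim_id y) Hy).
  replace (- / (y * y)) with ((0 * id y - 1 * fct_cte 1 y) / (id y)²).
  replace Rinv with (fct_cte 1 / id)%F. exact H.
  apply functional_extensionality; intros z. unfold div_fct, fct_cte, id, Rdiv. ring.
  unfold fct_cte, id, Rsqr. field. auto.
Qed.

Lemma smooth_deriv f : smooth_on_I f ->
  exists g, smooth_on_I g /\ forall t, Iint t -> is_derive_in f t (g t).
Proof.
  intros [D [H0 HD]]. exists (D 1%nat). split.
  - exists (fun n => D (S n)). split; auto.
  - intros t Ht. apply (derive_ext (D 0%nat)); auto.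
Qed.

Lemma closed_smooth (S : net -> Prop) :
  (forall f, S f -> exists g, S g /\ forall t, Iint t -> is_derive_in f t (g t)) ->
  forall f, S f -> smooth_on_I f.
Proof.
  intros HS f Hf.
  set (d := fun f : net => epsilon (inhabits (fun _ : R => 0))
     (fun g => S f -> S g /\ forall t, Iint t -> is_derive_in f t (g t))).
  assert (Hd : forall f, S f -> S (d f) /\ forall t, Iint t -> is_derive_in f t (d f t)).
  { intros g Hg. unfold d.
    refine (epsilon_spec (inhabits (fun _ : R => 0)) (fun g0 => S g -> S g0 /\ forall t, Iint t -> is_derive_in g t (g0 t)) _ Hg).
    destruct (HS g Hg) as [h Hh]. exists h. intros _. exact Hh. }
  exists (fun n => Nat.iter n d f). split.
  - intros; reflexivity.
  - assert (forall n, S (Nat.iter n d f)).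
    { induction n; simpl; auto. apply Hd; auto. }
    intros n t Ht. simpl. apply Hd; auto.
Qed.

Inductive gen (A : net -> Prop) : net -> Prop :=
| gsm f : smooth_on_I f -> gen A f
| gat f : A f -> gen A f
| gadd f g : gen A f -> gen A g -> gen A (fun t => f t + g t)
| gmul f g : gen A f -> gen A g -> gen A (fun t => f t * g t)
| gext f g : gen A f -> (forall t, Iint t -> f t = g t) -> gen A g.

Lemma gen_smooth (A : net -> Prop) :
  (forall f, A f -> exists g, gen A g /\ forall t, Iint t -> is_derive_in f t (g t)) ->
  forall f, gen A f -> smooth_on_I f.
Proof.
  intros HA. apply closed_smooth. intros f Hf. induction Hf.
  - destruct (smooth_deriv f H) as [g [Hg1 Hg2]]. exists g. split; auto. now apply (gsm A).
  - auto.
  - destruct IHHf1 as [f' [H1 H2]], IHHf2 as [g' [H3 H4]].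
    exists (fun t => f' t + g' t). split. now apply gadd. intros t Ht; apply derive_plus; auto.
  - destruct IHHf1 as [f' [H1 H2]], IHHf2 as [g' [H3 H4]].
    exists (fun t => f' t * g t + f t * g' t). split.
    apply gadd; apply gmul; auto. intros t Ht; apply derive_mult; auto.
  - destruct IHHf as [f' [H1 H2]]. exists f'. split; auto.
    intros t Ht. apply (derive_ext f); auto.
Qed.

Lemma smooth_const c : smooth_on_I (fun _ => c).
Proof.
  exists (fun n => match n with O => fun _ => c | _ => fun _ => 0 end). split.
  - reflexivity.
  - intros [|n] t _; apply derive_const.
Qed.

Lemma smooth_id : smooth_on_I (fun t => t).
Proof.
  exists (fun n => match n with O => fun t => t | 1%nat => fun _ => 1 | _ => fun _ => 0 end). split.
  - reflexivity.
  - intros [|[|n]] t _. apply derive_id. apply derive_const. apply derive_const.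
Qed.

Lemma gen0 f : gen (fun _ => False) f -> smooth_on_I f.
Proof. apply gen_smooth. intros f0 []. Qed.

Lemma smooth_plus f g : smooth_on_I f -> smooth_on_I g -> smooth_on_I (fun t => f t + g t).
Proof. intros; apply gen0, gadd; now apply gsm. Qed.

Lemma smooth_mult f g : smooth_on_I f -> smooth_on_I g -> smooth_on_I (fun t => f t * g t).
Proof. intros; apply gen0, gmul; now apply gsm. Qed.

Lemma smooth_ext f g : smooth_on_I f -> (forall t, Iint t -> f t = g t) -> smooth_on_I g.
Proof. intros; apply gen0. eapply gext; eauto. now apply gsm. Qed.

Lemma smooth_inv u : smooth_on_I u -> (forall t, Iint t -> u t <> 0) ->
  smooth_on_I (fun t => / u t).
Proof.
  intros Hu Hnz. destruct (smooth_deriv u Hu) as [u' [Hu' Du]].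
  apply (gen_smooth (fun f => f = fun t => / u t)); [|now apply gat].
  intros f ->. exists (fun t => (/ u t * / u t) * ((-1) * u' t)). split.
  - apply gmul. apply gmul; now apply gat. apply gmul; apply gsm; auto. apply smooth_const.
  - intros t Ht. assert (H := derive_comp Rinv _ u t _ (dpl_Rinv _ (Hnz t Ht)) (Du t Ht)).
    replace (/ u t * / u t * (-1 * u' t)) with (- / (u t * u t) * u' t).
    exact H. field. auto.
Qed.

Lemma smooth_exp v : smooth_on_I v -> smooth_on_I (fun t => exp (v t)).
Proof.
  intros Hv. destruct (smooth_deriv v Hv) as [v' [Hv' Dv]].
  apply (gen_smooth (fun f => f = fun t => exp (v t))); [|now apply gat].
  intros f ->. exists (fun t => exp (v t) * v' t). split.
  - apply gmul. now apply gat. now apply gsm.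
  - intros t Ht. exact (derive_comp exp _ v t _ (derivable_pt_lim_exp _) (Dv t Ht)).
Qed.

Lemma smooth_sqrt u : smooth_on_I u -> (forall t, Iint t -> 0 < u t) ->
  smooth_on_I (fun t => sqrt (u t)).
Proof.
  intros Hu Hp. destruct (smooth_deriv u Hu) as [u' [Hu' Du]].
  set (s := fun t => sqrt (u t)). set (k := fun t => / sqrt (u t)).
  assert (Ds : forall t, Iint t -> is_derive_in s t (/ 2 * k t * u' t)).
  { intros t Ht. assert (H := derive_comp sqrt _ u t _ (derivable_pt_lim_sqrt _ (Hp t Ht)) (Du t Ht)).
    unfold k. replace (/ 2 * / sqrt (u t) * u' t) with (/ (2 * sqrt (u t)) * u' t).
    exact H. field. apply Rgt_not_eq, sqrt_lt_R0, Hp; auto. }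
  apply (gen_smooth (fun f => f = s \/ f = k)); [|now apply gat; left].
  intros f [->| ->].
  - exists (fun t => / 2 * k t * u' t). split.
    apply gmul. apply gmul. apply gsm, smooth_const. apply gat; now right. now apply gsm.
    auto.
  - exists (fun t => (k t * k t) * ((- / 2 * k t) * u' t)). split.
    + apply gmul. apply gmul; apply gat; now right. apply gmul. apply gmul.
      apply gsm, smooth_const. apply gat; now right. now apply gsm.
    + intros t Ht. assert (Hs : s t <> 0). { apply Rgt_not_eq, sqrt_lt_R0, Hp; auto. }
      assert (H := derive_comp Rinv _ s t _ (dpl_Rinv _ Hs) (Ds t Ht)).
      unfold k in *. fold (s t).
      replace (/ s t * / s t * (- / 2 * / s t * u' t)) with (- / (s t * s t) * (/ 2 * / s t * u' t)).
      exact H. field. auto.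
Qed.

Lemma negl_le f g : (forall e, Iint e -> Rabs (f e) <= g e) -> negligible g -> negligible f.
Proof.
  intros H Hg m. destruct (Hg m) as [C [e0 [He0 HC]]]. exists C, e0. split; auto.
  intros e He He'. specialize (H e He). specialize (HC e He He').
  apply Rle_trans with (1 := H). apply Rle_trans with (2 := HC). apply Rle_abs.
Qed.

Lemma negl_plus f g : negligible f -> negligible g -> negligible (fun e => f e + g e).
Proof.
  intros Hf Hg m. destruct (Hf m) as [C1 [e1 [He1 H1]]], (Hg m) as [C2 [e2 [He2 H2]]].
  exists (C1 + C2), (Rmin e1 e2). split. now apply Rmin_pos.
  intros e He He'. assert (e <= e1) by (apply Rle_trans with (1 := He'); apply Rmin_l).
  assert (e <= e2) by (apply Rle_trans with (1 := He'); apply Rmin_r).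
  specialize (H1 e He H). specialize (H2 e He H0).
  apply Rle_trans with (1 := Rabs_triang _ _). lra.
Qed.

Lemma negl_scal k f : negligible f -> negligible (fun e => k * f e).
Proof.
  intros Hf m. destruct (Hf m) as [C [e0 [He0 H]]]. exists (Rabs k * C), e0. split; auto.
  intros e He He'. rewrite Rabs_mult, Rmult_assoc. apply Rmult_le_compat_l.
  apply Rabs_pos. auto.
Qed.

Lemma negl_abs f : negligible f -> negligible (fun e => Rabs (f e)).
Proof.
  intros Hf. apply (negl_le _ (fun e => Rabs (f e))).
  intros e _. rewrite Rabs_Rabsolu. lra.
  intros m. destruct (Hf m) as [C [e0 [He0 H]]]. exists C, e0. split; auto.
  intros e He He'. rewrite Rabs_Rabsolu. auto.
Qed.

Lemma pow_le1 e k : Iint e -> e ^ k <= 1.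
Proof.
  intros [h1 h2]. induction k; simpl. lra.
  replace 1 with (1 * 1) by ring. apply Rmult_le_compat; try lra.
  apply pow_le; lra.
Qed.

Lemma pow_pos' e k : Iint e -> 0 < e ^ k.
Proof. intros [h1 h2]. now apply pow_lt. Qed.

Lemma mod_abs_bound f : moderate f -> exists N C eps0, 0 < eps0 /\ 0 <= C /\
  forall e, Iint e -> e <= eps0 -> Rabs (f e) <= C / e ^ N.
Proof.
  intros [N [C [e0 [He0 H]]]]. exists N, (Rabs C), e0. repeat split; auto. apply Rabs_pos.
  intros e He He'. apply Rle_trans with (1 := H e He He'). unfold Rdiv.
  apply Rmult_le_compat_r. left; apply Rinv_0_lt_compat, pow_pos'; auto. apply Rle_abs.
Qed.

Lemma mod_shift C N k e : 0 <= C -> Iint e -> C / e ^ N <= C / e ^ (N + k).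
Proof.
  intros HC He. unfold Rdiv. apply Rmult_le_compat_l; auto.
  apply Rinv_le_contravar. apply pow_pos'; auto.
  rewrite pow_add. pattern (e ^ N) at 2; rewrite <- Rmult_1_r.
  apply Rmult_le_compat_l. left; apply pow_pos'; auto. apply pow_le1; auto.
Qed.

Lemma mod_le f g : (forall e, Iint e -> Rabs (f e) <= Rabs (g e)) -> moderate g -> moderate f.
Proof.
  intros H [N [C [e0 [He0 HC]]]]. exists N, C, e0. split; auto.
  intros e He He'. apply Rle_trans with (1 := H e He); auto.
Qed.

Lemma mod_plus f g : moderate f -> moderate g -> moderate (fun e => f e + g e).
Proof.
  intros Hf Hg. destruct (mod_abs_bound _ Hf) as [N1 [C1 [e1 [He1 [HC1 H1]]]]].
  destruct (mod_abs_bound _ Hg) as [N2 [C2 [e2 [He2 [HC2 H2]]]]].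
  exists (N1 + N2)%nat, (C1 + C2), (Rmin e1 e2). split. now apply Rmin_pos.
  intros e He He'. assert (e <= e1) by (apply Rle_trans with (1 := He'); apply Rmin_l).
  assert (e <= e2) by (apply Rle_trans with (1 := He'); apply Rmin_r).
  specialize (H1 e He H). specialize (H2 e He H0).
  pose proof (mod_shift C1 N1 N2 e HC1 He). pose proof (mod_shift C2 N2 N1 e HC2 He).
  rewrite Nat.add_comm in H4.
  apply Rle_trans with (1 := Rabs_triang _ _). unfold Rdiv in *. lra.
Qed.

Lemma mod_const c : moderate (fun _ => c).
Proof.
  exists 0%nat, (Rabs c), 1. split. lra. intros e _ _. simpl. lra.
Qed.

Lemma mod_abs f : moderate f -> moderate (fun e => Rabs (f e)).
Proof. apply mod_le. intros e _. rewrite Rabs_Rabsolu; lra. Qed.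

Lemma mod_opp f : moderate f -> moderate (fun e => - f e).
Proof. apply mod_le. intros e _. rewrite Rabs_Ropp; lra. Qed.

Lemma negl_mod f : negligible f -> moderate f.
Proof.
  intros Hf. destruct (Hf 0%nat) as [C [e0 [He0 H]]]. exists 0%nat, C, e0. split; auto.
  intros e He He'. specialize (H e He He'). simpl in *. lra.
Qed.

Lemma negl_mult f g : negligible f -> moderate g -> negligible (fun e => f e * g e).
Proof.
  intros Hf Hg m. destruct (mod_abs_bound _ Hg) as [N [C2 [e2 [He2 [HC2 H2]]]]].
  destruct (Hf (m + N)%nat) as [C1 [e1 [He1 H1]]].
  exists (Rabs C1 * C2), (Rmin e1 e2). split. now apply Rmin_pos.
  intros e He He'. assert (e <= e1) by (apply Rle_trans with (1 := He'); apply Rmin_l).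
  assert (e <= e2) by (apply Rle_trans with (1 := He'); apply Rmin_r).
  specialize (H1 e He H). specialize (H2 e He H0).
  assert (H1' : Rabs (f e) <= Rabs C1 * e ^ (m + N)).
  { apply Rle_trans with (1 := H1). apply Rmult_le_compat_r. left; apply pow_pos'; auto. apply Rle_abs. }
  rewrite Rabs_mult. pose proof (pow_pos' e N He).
  apply Rle_trans with ((Rabs C1 * e ^ (m + N)) * (C2 / e ^ N)).
  apply Rmult_le_compat; auto; apply Rabs_pos.
  rewrite pow_add. right. field. lra.
Qed.

Lemma negl_sqrt f g : (forall e, Iint e -> f e * f e <= g e) -> negligible g -> negligible f.
Proof.
  intros H Hg m. destruct (Hg (2 * m)%nat) as [C [e0 [He0 HC]]].
  exists (sqrt (Rabs C)), e0. split; auto. intros e He He'.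
  specialize (H e He). specialize (HC e He He').
  assert (Hp := pow_pos' e m He).
  rewrite <- (sqrt_Rsqr_abs (f e)).
  replace (sqrt (Rabs C) * e ^ m) with (sqrt (Rabs C * (e ^ m * e ^ m))).
  apply sqrt_le_1_alt. unfold Rsqr. apply Rle_trans with (1 := H).
  apply Rle_trans with (1 := Rle_abs _). apply Rle_trans with (1 := HC).
  rewrite <- pow_add. replace (m + m)%nat with (2 * m)%nat by lia.
  apply Rmult_le_compat_r. left; apply pow_pos'; auto. apply Rle_abs.
  rewrite sqrt_mult. rewrite sqrt_square; auto. lra. apply Rabs_pos.
  apply Rmult_le_pos; lra.
Qed.

Lemma exp_INR_mult n y : exp (INR n * y) = exp y ^ n.
Proof.
  induction n. simpl. rewrite Rmult_0_l. apply exp_0.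
  rewrite S_INR, Rmult_plus_distr_r, Rmult_1_l, exp_plus, IHn. simpl. ring.
Qed.

Lemma negl_E : negligible (fun e => exp (- / e)).
Proof.
  intros m. exists (INR m ^ m), 1. split. lra. intros e [h1 h2] _.
  rewrite Rabs_pos_eq by (left; apply exp_pos).
  destruct m as [|k].
  - simpl. rewrite Rmult_1_l, <- exp_0. left. apply exp_increasing.
    assert (0 < / e) by (apply Rinv_0_lt_compat; lra). lra.
  - set (m := S k). assert (Hm : 0 < INR m) by (apply lt_0_INR; unfold m; lia).
    set (y := / (e * INR m)). assert (Hy : 0 < y) by (apply Rinv_0_lt_compat, Rmult_lt_0_compat; lra).
    assert (E : / e = INR m * y) by (unfold y; field; lra).
    rewrite exp_Ropp, E, exp_INR_mult.
    assert (Hey : y <= exp y) by (pose proof (exp_ineq1_le y); lra).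
    assert (Hp : y ^ m <= exp y ^ m) by (apply pow_incr; lra).
    assert (Hyp : 0 < y ^ m) by (apply pow_lt; auto).
    apply Rle_trans with (/ y ^ m). apply Rinv_le_contravar; auto.
    assert (Hk : y ^ m * (INR m ^ m * e ^ m) = 1).
    { rewrite <- Rpow_mult_distr, <- Rpow_mult_distr. replace (y * (INR m * e)) with 1. apply pow1.
      unfold y. field. lra. }
    right. apply (Rmult_eq_reg_l (y ^ m)). rewrite Hk. field. lra. lra.
Qed.

Lemma sqrt_le_sum u v : sqrt (u * u + v * v) <= Rabs u + Rabs v.
Proof.
  pose proof (Rabs_pos u). pose proof (Rabs_pos v).
  rewrite <- (sqrt_square (Rabs u + Rabs v)) by lra.
  apply sqrt_le_1_alt.
  assert (Hu : u * u = Rabs u * Rabs u) by (pose proof (Rsqr_abs u); unfold Rsqr in *; lra).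
  assert (Hv : v * v = Rabs v * Rabs v) by (pose proof (Rsqr_abs v); unfold Rsqr in *; lra).
  rewrite Hu, Hv. assert (0 <= Rabs u * Rabs v) by (apply Rmult_le_pos; auto). nra.
Qed.

Lemma sqrt_ge_abs u v : Rabs u <= sqrt (u * u + v * v).
Proof.
  rewrite <- sqrt_Rsqr_abs. apply sqrt_le_1_alt. unfold Rsqr. pose proof (Rle_0_sqr v). unfold Rsqr in H. lra.
Qed.

Lemma rep_spec x : qset x = cls (rep x).
Proof.
  unfold rep. destruct (constructive_indefinite_description _ (qok x)) as [r Hr]. exact Hr.
Qed.

Lemma negl_zero : negligible (fun _ => 0).
Proof. intros m. exists 0, 1. split. lra. intros e _ _. rewrite Rabs_R0. lra. Qed.

Lemma negl_eqI f g : (forall e, Iint e -> f e = g e) -> negligible g -> negligible f.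
Proof.
  intros E Hg. apply (negl_le _ (fun e => Rabs (g e))). intros e He. rewrite E; auto. lra.
  now apply negl_abs.
Qed.

Lemma cls_refl r : cls r r.
Proof. unfold cls. apply (negl_eqI _ (fun _ => 0)). intros; ring. apply negl_zero. Qed.

Lemma Q_ext x y : qset x = qset y -> x = y.
Proof.
  destruct x as [qx px], y as [qy py]; simpl. intros ->. f_equal. apply proof_irrelevance.
Qed.

Lemma cls_eq r s : negligible (fun e => r e - s e) -> cls r = cls s.
Proof.
  intros H. apply functional_extensionality. intros t. apply propositional_extensionality.
  unfold cls. split; intros H'.
  - apply (negl_eqI _ (fun e => (t e - r e) + (r e - s e))). intros; ring. now apply negl_plus.
  - apply (negl_eqI _ (fun e => (t e - s e) + (-1) * (r e - s e))). intros; ring.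
    apply negl_plus; auto. now apply negl_scal.
Qed.

Lemma smooth_opp f : smooth_on_I f -> smooth_on_I (fun t => - f t).
Proof.
  intros H. apply (smooth_ext (fun t => (-1) * f t)). apply smooth_mult; auto. apply smooth_const.
  intros; ring.
Qed.

Lemma smooth_minus f g : smooth_on_I f -> smooth_on_I g -> smooth_on_I (fun t => f t - g t).
Proof. intros. apply smooth_plus; auto. now apply smooth_opp. Qed.

Lemma smooth_E : smooth_on_I (fun t => exp (- / t)).
Proof.
  apply smooth_exp. apply smooth_opp. apply smooth_inv. apply smooth_id.
  intros t [h1 h2]. lra.
Qed.

Theorem proposition4p25 :
  forall J : Q -> Prop, is_ideal_sm J ->
  forall x y : Q, in_Rsm x -> in_Rsm y -> J x ->
    qle (qabs y) (qabs x) -> J y.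
Proof.
  intros J [Hsm [H0 [Hadd [Hopp Hmul]]]] x y [X [[HXs HXm] HX]] [Y [[HYs HYm] HY]] Jx
    [a [b [[Has Ham] [[Hbs Hbm] [Ha [Hb Hab]]]]]].
  rewrite rep_spec in HX, HY. unfold qabs in Ha, Hb. simpl in Ha, Hb. unfold cls in *.
  set (Z1 := fun e => a e - Rabs (Y e)).
  set (Z2 := fun e => b e - Rabs (X e)).
  assert (NZ1 : negligible Z1).
  { apply (negl_le _ (fun e => Rabs (a e - Rabs (rep y e)) + Rabs (Y e - rep y e))).
    - intros e _. unfold Z1. pose proof (Rabs_triang_inv2 (Y e) (rep y e)).
      rewrite Rabs_minus_sym in H.
      replace (a e - Rabs (Y e)) with ((a e - Rabs (rep y e)) + (Rabs (rep y e) - Rabs (Y e))) by ring.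
      apply Rle_trans with (1 := Rabs_triang _ _). lra.
    - apply negl_plus; now apply negl_abs. }
  assert (NZ2 : negligible Z2).
  { apply (negl_le _ (fun e => Rabs (b e - Rabs (rep x e)) + Rabs (X e - rep x e))).
    - intros e _. unfold Z2. pose proof (Rabs_triang_inv2 (X e) (rep x e)).
      rewrite Rabs_minus_sym in H.
      replace (b e - Rabs (X e)) with ((b e - Rabs (rep x e)) + (Rabs (rep x e) - Rabs (X e))) by ring.
      apply Rle_trans with (1 := Rabs_triang _ _). lra.
    - apply negl_plus; now apply negl_abs. }
  set (E := fun t => exp (- / t)).
  set (g := fun t => a t + b t).
  set (h := fun t => sqrt (g t * g t + E t * E t) - g t).
  set (S1 := fun t => a t * a t - Y t * Y t).
  set (S2 := fun t => b t * b t - X t * X t).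
  set (D := fun t => S2 t - S1 t + (b t - a t) * h t).
  set (phi := fun t => sqrt (D t * D t + E t * E t)).
  set (s := fun t => X t * X t + phi t).
  set (c := fun t => (Y t * X t) * / s t).
  assert (HE : forall t, 0 < E t) by (intros; apply exp_pos).
  assert (Hphi : forall t, Rabs (D t) <= phi t /\ E t <= phi t).
  { intros t. split. apply sqrt_ge_abs. unfold phi. rewrite Rplus_comm.
    pose proof (sqrt_ge_abs (E t) (D t)). rewrite Rabs_pos_eq in H; auto. left; auto. }
  assert (Hs : forall t, 0 < s t).
  { intros t. unfold s. destruct (Hphi t). pose proof (HE t). pose proof (Rle_0_sqr (X t)). unfold Rsqr in *. lra. }
  assert (Hh : forall t, - g t <= h t /\ 0 <= h t).
  { intros t. unfold h. pose proof (sqrt_ge_abs (g t) (E t)). pose proof (Rle_abs (g t)).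
    split. pose proof (Rabs_pos (g t)). 
    pose proof (Rabs_Ropp (g t)). pose proof (Rle_abs (- g t)). lra. lra. }
  assert (HYX : forall t, Iint t -> Y t * Y t <= s t).
  { intros t Ht. specialize (Hab t Ht). destruct (Hh t) as [h1 h2]. destruct (Hphi t) as [p1 p2].
    pose proof (Rle_abs (D t)).
    assert (a t * a t - b t * b t <= (b t - a t) * h t).
    { replace (a t * a t - b t * b t) with ((b t - a t) * (- g t)) by (unfold g; ring).
      apply Rmult_le_compat_l; lra. }
    unfold s, D, S1, S2 in *. lra. }
  set (r := fun t => Y t - c t * X t).
  assert (Hr : forall t, Iint t -> r t * r t <= phi t).
  { intros t Ht. assert (Er : r t = Y t * phi t * / s t).
    { unfold r, c. apply (Rmult_eq_reg_r (s t)). field_simplify. unfold s. ring.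
      apply Rgt_not_eq, Hs. apply Rgt_not_eq, Hs. apply Rgt_not_eq, Hs. }
    rewrite Er. specialize (HYX t Ht). pose proof (Hs t). destruct (Hphi t) as [_ p2].
    pose proof (HE t). assert (phi t <= s t) by (unfold s; pose proof (Rle_0_sqr (X t)); unfold Rsqr in *; lra).
    apply (Rmult_le_reg_r (s t * s t)). nra.
    replace (Y t * phi t * / s t * (Y t * phi t * / s t) * (s t * s t)) with (Y t * Y t * (phi t * phi t)) by (field; lra).
    apply Rle_trans with (s t * (phi t * phi t)). apply Rmult_le_compat_r; nra.
    replace (phi t * (s t * s t)) with (s t * (s t * phi t)) by ring.
    apply Rmult_le_compat_l; nra. }
  assert (Hc : forall t, Iint t -> Rabs (c t) <= Rabs 1).
  { intros t Ht. rewrite Rabs_R1.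
    assert (c t * c t <= 1).
    { specialize (HYX t Ht). pose proof (Hs t). destruct (Hphi t) as [_ p2]. pose proof (HE t).
      assert (X t * X t <= s t) by (unfold s; lra).
      apply (Rmult_le_reg_r (s t * s t)). nra.
      replace (c t * c t * (s t * s t)) with (Y t * Y t * (X t * X t)) by (unfold c; field; lra).
      apply Rle_trans with (s t * (X t * X t)). apply Rmult_le_compat_r; nra. nra. }
    pose proof (Rsqr_abs (c t)). unfold Rsqr in *. pose proof (Rabs_pos (c t)). nra. }
  assert (NE : negligible E) by apply negl_E.
  assert (Nh : negligible h).
  { apply (negl_le _ (fun t => 2 * (Rabs (Z1 t) + Rabs (Z2 t)) + E t)).
    - intros t _. destruct (Hh t) as [h1 h2]. rewrite Rabs_pos_eq by auto.
      pose proof (sqrt_le_sum (g t) (E t)). rewrite (Rabs_pos_eq (E t)) in H by (left; auto).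
      assert (g t >= Z1 t + Z2 t) by (unfold g, Z1, Z2; pose proof (Rabs_pos (Y t)); pose proof (Rabs_pos (X t)); lra).
      pose proof (Rle_abs (Z1 t)). pose proof (Rle_abs (- Z1 t)). pose proof (Rle_abs (Z2 t)). pose proof (Rle_abs (- Z2 t)).
      rewrite Rabs_Ropp in *. unfold h. destruct (Rle_dec 0 (g t)).
      + rewrite Rabs_pos_eq in H by auto. lra.
      + rewrite Rabs_left in H by lra. lra.
    - apply negl_plus; auto. apply negl_scal, negl_plus; now apply negl_abs. }
  assert (NS1 : negligible S1).
  { apply (negl_eqI _ (fun t => Z1 t * (a t + Rabs (Y t)))).
    - intros t _. unfold S1, Z1. pose proof (Rsqr_abs (Y t)). unfold Rsqr in *. nra.
    - apply negl_mult; auto. apply mod_plus; auto. now apply mod_abs. }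
  assert (NS2 : negligible S2).
  { apply (negl_eqI _ (fun t => Z2 t * (b t + Rabs (X t)))).
    - intros t _. unfold S2, Z2. pose proof (Rsqr_abs (X t)). unfold Rsqr in *. nra.
    - apply negl_mult; auto. apply mod_plus; auto. now apply mod_abs. }
  assert (ND : negligible D).
  { apply negl_plus. apply negl_plus; auto.
    apply (negl_eqI _ (fun t => (-1) * S1 t)). intros; ring. now apply negl_scal.
    apply (negl_eqI _ (fun t => h t * (b t - a t))). intros; ring.
    apply negl_mult; auto. apply mod_plus; auto. now apply mod_opp. }
  assert (Nphi : negligible phi).
  { apply (negl_le _ (fun t => Rabs (D t) + E t)).
    - intros t _. destruct (Hphi t) as [_ p2]. pose proof (HE t).
      rewrite Rabs_pos_eq by lra. pose proof (sqrt_le_sum (D t) (E t)).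
      rewrite (Rabs_pos_eq (E t)) in H1 by lra. exact H1.
    - apply negl_plus; auto. now apply negl_abs. }
  assert (Nr : negligible r) by (apply (negl_sqrt _ phi); auto).
  assert (Smc : smooth_on_I c).
  { assert (SE : smooth_on_I E) by apply smooth_E.
    assert (Sg : smooth_on_I g) by (apply smooth_plus; auto).
    assert (Sh : smooth_on_I h).
    { apply smooth_minus; auto. apply smooth_sqrt. apply smooth_plus; apply smooth_mult; auto.
      intros t _. pose proof (HE t). pose proof (Rle_0_sqr (g t)). unfold Rsqr in *. nra. }
    assert (SD : smooth_on_I D).
    { apply smooth_plus. apply smooth_minus; apply smooth_minus; apply smooth_mult; auto.
      apply smooth_mult; auto. apply smooth_minus; auto. }
    assert (Sphi : smooth_on_I phi).
    { apply smooth_sqrt. apply smooth_plus; apply smooth_mult; auto.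
      intros t _. pose proof (HE t). pose proof (Rle_0_sqr (D t)). unfold Rsqr in *. nra. }
    apply smooth_mult. apply smooth_mult; auto. apply smooth_inv.
    apply smooth_plus; auto. apply smooth_mult; auto.
    intros t _. apply Rgt_not_eq, Hs. }
  assert (Mc : moderate c) by (apply (mod_le _ (fun _ => 1)); auto; apply mod_const).
  assert (Hcc : in_Rsm (class c)) by (exists c; split; [split; auto | apply cls_refl]).
  assert (Jcx := Hmul _ _ Hcc Jx).
  replace y with (qmul (class c) x); auto.
  apply Q_ext. unfold qmul. simpl. rewrite (rep_spec y). apply cls_eq.
  assert (N1 : negligible (fun t => rep (class c) t - c t)).
  { assert (H1 := cls_refl c). change (qset (class c) c) in H1. rewrite rep_spec in H1.
    unfold cls in H1. apply (negl_eqI _ (fun t => (-1) * (c t - rep (class c) t))). intros; ring.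
    now apply negl_scal. }
  assert (N2 : negligible (fun t => rep x t - X t)).
  { apply (negl_eqI _ (fun t => (-1) * (X t - rep x t))). intros; ring. now apply negl_scal. }
  assert (N3 : negligible (fun t => rep y t - Y t)).
  { apply (negl_eqI _ (fun t => (-1) * (Y t - rep y t))). intros; ring. now apply negl_scal. }
  apply (negl_eqI _ (fun t => (-1) * r t + (c t * (rep x t - X t) + ((rep (class c) t - c t) * X t
        + ((rep (class c) t - c t) * (rep x t - X t) + (-1) * (rep y t - Y t)))))).
  { intros t _. unfold r. ring. }
  apply negl_plus. now apply negl_scal.
  apply negl_plus. apply (negl_eqI _ (fun t => (rep x t - X t) * c t)). intros; ring. now apply negl_mult.
  apply negl_plus. now apply negl_mult.
  apply negl_plus. apply negl_mult; auto. now apply negl_mod.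
  now apply negl_scal.
Qed.
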